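(* Let $a,n\in\mathbb{Z}^+$. Let $S=\mathbb{Z}[x]/(x^n-a)$ and for each $k\ge 0$ let $f_k(x)$ be the image of $(x+1)^k$ in $S$. Then $$\sqrt[n]{a} = \lim_{k\to\infty}\frac{f_{k+1}(1)}{f_k(1)} - 1 \quad\text{(in } \mathbb{R}).$$
   Context: The image of $(x+1)^k$ in $S$ is identified with its unique representative in $\mathbb{Z}[x]$ of degree less than $n$ (the remainder of $(x+1)^k$ upon division by $x^n-a$), and $f_k(1)$ denotes the evaluation of this representative at $x=1$; explicitly $f_k(1)=\sum_{j=0}^k\binom{k}{j}a^{\lfloor j/n\rfloor}$. $\sqrt[n]{a}$ denotes the positive real $n$-th root of $a$. *)

(* Defs.v *)
From HB Require Import structures.
From mathcomp Require Import all_boot all_order all_algebra.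
From mathcomp Require Import all_classical all_reals all_analysis.
Set Implicit Arguments. Unset Strict Implicit. Unset Printing Implicit Defensive.
Import Order.TTheory GRing.Theory Num.Theory.
Local Open Scope ring_scope.

(* f_k : the representative of degree < n of the image of (x+1)^k in
   S = Z[x]/(x^n - a), i.e. the remainder of (x+1)^k modulo the monic
   polynomial x^n - a. *)
Definition fk (a n k : nat) : {poly int} :=
  (('X + 1) ^+ k) %% ('X ^+ n - (a%:Z)%:P).

Definition fk1 (a n k : nat) : int := (fk a n k).[1].

(* Main.v *)
Require Import Defs.
From HB Require Import structures.
From mathcomp Require Import all_boot all_order all_algebra.
From mathcomp Require Import all_classical all_reals all_analysis.
From mathcomp Require Import ring lra zify.
Import Order.TTheory GRing.Theory Num.Theory.
Local Open Scope classical_set_scope.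
Local Open Scope ring_scope.

Lemma fk1E a n k : (0 < n)%N ->
  fk1 a n k = \sum_(j < k.+1) ('C(k, j) * a ^ (j %/ n))%N%:Z.
Proof.
move=> hn.
set d := 'X^n - (a%:Z)%:P.
set Rk := \sum_(j < k.+1) ((('C(k,j) * a^(j%/n))%N%:Z)%:P * 'X^(j %% n)).
have E : ('X + 1)^+k = (\sum_(j<k.+1) ('C(k,j)%:R * 'X^(j%%n) *
     \sum_(i < j%/n) ('X^n)^+((j%/n).-1 - i) * ((a%:Z)%:P)^+i)) * d + Rk.
  rewrite exprD1n mulr_suml -big_split /=; apply eq_bigr => j _.
  rewrite {1}(divn_eq j n) (mulnC _ n) exprD exprM.
  have E := subrXX ('X^n) ((a%:Z)%:P) (j%/n).
  rewrite -mulrA (mulrC _ d) -E.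
  rewrite PoszM polyCM -mulr_natl.
  have -> : ((a ^ (j %/ n))%N%:Z)%:P = ((a%:Z)%:P)^+(j%/n) :> {poly int}.
    by rewrite -rmorphXn -!natz natrX.
  rewrite -natz rmorph_nat.
  ring.
have sz : (size Rk < size d)%N.
  rewrite size_XnsubC //.
  apply: (leq_ltn_trans (size_sum _ _ _)).
  rewrite ltnS; apply/bigmax_leqP => j _.
  apply: (leq_trans (size_polyMleq _ _)).
  rewrite size_polyXn.
  have := size_polyC_leq1 (('C(k,j) * a^(j%/n))%N%:Z).
  have := ltn_pmod j hn.
  case: (size _) => [|[|m]] //= ; lia.
have ul : lead_coef d \in GRing.unit.
  by have /monicP -> := monicXnsubC ((a%:Z)) hn; rewrite unitr1.
rewrite /fk1 /fk -/d E (Pdiv.IdomainUnit.modp_addl_mul_small ul _ sz).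
rewrite /Rk horner_sum; apply eq_bigr => j _.
by rewrite !hornerE /= expr1n mulr1.
Qed.

Module Aux.
Import numFieldNormedType.Exports.
Section Equi.
Variable R : realType.
Variable n : nat.
Hypothesis hn : (0 < n)%N.
Variables p q : R.
Hypotheses (hp : 0 < p) (hq : 0 < q) (hpq : p + q = 1).

Definition T k j : R := 'C(k,j)%:R * q^+j * p^+(k-j).
Definition U k r : R := \sum_(0 <= j < k.+1 | (j %% n == r %% n)%N) T k j.

Lemma T_rec k j : T k.+1 j.+1 = p * T k j.+1 + q * T k j.
Proof.
rewrite /T binS natrD subSS; case: (ltnP j k) => hjk.
  have -> : (k - j = (k - j.+1).+1)%N by lia.
  rewrite !exprS; ring.
by rewrite (@bin_small k j.+1) // !exprS; ring.
Qed.

Lemma T0 k : T k.+1 0 = p * T k 0.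
Proof. by rewrite /T !bin0 !subn0 exprS; ring. Qed.

Lemma T_big k j : (k < j)%N -> T k j = 0.
Proof. by move=> h; rewrite /T bin_small // !mul0r. Qed.

Lemma T_ge0 k j : 0 <= T k j.
Proof. by rewrite /T !mulr_ge0 // exprn_ge0 // ltW. Qed.

Lemma modS_eq j r : (j.+1 %% n == r %% n)%N = (j %% n == (r + n.-1) %% n)%N.
Proof.
by rewrite -(eqn_modDr 1 j) -addnA !addn1 prednK // modnDr.
Qed.

Lemma U_rec k r : U k.+1 r = p * U k r + q * U k (r + n.-1).
Proof.
rewrite /U !(big_mkcond (fun j => _ == _)) /=.
have ext : forall r', \sum_(0 <= j < k.+1) (if (j %% n == r' %% n)%N then T k j else 0) =
   (if (0 %% n == r' %% n)%N then T k 0 else 0) +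
   \sum_(0 <= j < k.+1) (if (j.+1 %% n == r' %% n)%N then T k j.+1 else 0).
  move=> r'; transitivity (\sum_(0 <= j < k.+2) (if (j %% n == r' %% n)%N then T k j else 0)).
    by rewrite [RHS]big_nat_recr //= T_big // if_same addr0.
  by rewrite big_nat_recl.
rewrite big_nat_recl // ext.
rewrite mulrDr !mulr_sumr -addrA -big_split /=.
rewrite T0; congr (_ + _); first by case: ifP => _; ring.
apply: eq_bigr => j _; rewrite modS_eq T_rec.
by case: ifP => _; ring.
Qed.

Lemma U_per k r : U k (r %% n)%N = U k r.
Proof. by rewrite /U modn_mod. Qed.

Lemma U_perD k r : U k (r + n) = U k r.
Proof. by rewrite -U_per modnDr U_per. Qed.

Lemma U_ge0 k r : 0 <= U k r.
Proof. by apply: sumr_ge0 => j _; exact: T_ge0. Qed.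

Lemma partition_sum (G : nat -> nat -> R) K :
  \sum_(r < n) \sum_(0 <= j < K | (j %% n == r %% n)%N) G r j = \sum_(0 <= j < K) G (j %% n)%N j.
Proof.
under eq_bigr do rewrite big_mkcond big_mkord.
rewrite exchange_big big_mkord /=; apply: eq_bigr => j _.
rewrite (bigD1 (Ordinal (ltn_pmod j hn))) //= modn_mod eqxx big1 ?addr0 //.
move=> i hi; rewrite (modn_small (ltn_ord i)).
case: eqP => // e; exfalso; move/negP: hi; apply; apply/eqP/val_inj => /=.
by rewrite e.
Qed.

Lemma U_sum k : \sum_(r < n) U k r = 1.
Proof.
rewrite (partition_sum (fun _ j => T k j)).
have := exprDn p q k; rewrite hpq expr1n => ->.
rewrite big_mkord; apply: eq_bigr => j _; rewrite /T -mulr_natl; ring.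
Qed.


Definition mn k : R := \big[Order.min/U k 0]_(r < n) U k r.

Lemma mn_le k r : mn k <= U k r.
Proof.
rewrite -U_per.
exact: (bigmin_le (U k 0) (Ordinal (ltn_pmod r hn)) (fun i : 'I_n => U k i)).
Qed.

Lemma mn_ge k c : (forall r, c <= U k r) -> c <= mn k.
Proof. by move=> h; apply: le_bigmin => // i _; exact: h. Qed.

Lemma mn_mono k : mn k <= mn k.+1.
Proof.
apply: mn_ge => r; rewrite U_rec.
have e1 : 0 <= p * (U k r - mn k) by rewrite mulr_ge0 ?subr_ge0 ?mn_le // ltW.
have e2 : 0 <= q * (U k (r + n.-1) - mn k) by rewrite mulr_ge0 ?subr_ge0 ?mn_le // ltW.
have e4 : mn k * (p + q) = mn k by rewrite hpq mulr1.
lra.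
Qed.

Lemma mn_le1 k : mn k <= 1.
Proof.
have h0 : 0 <= mn k by apply: mn_ge => r; exact: U_ge0.
have h : \sum_(r < n) mn k <= \sum_(r < n) U k r by apply: ler_sum => r _; exact: mn_le.
rewrite U_sum sumr_const card_ord -mulr_natr in h.
have hn1 : 1 <= n%:R :> R by rewrite ler1n.
have e : 0 <= mn k * (n%:R - 1) by rewrite mulr_ge0 // subr_ge0.
lra.
Qed.

Lemma propag k L (r0 : nat) : (forall r, L <= U k r) -> forall t,
  (forall r, L <= U (k + t) r) /\ (forall s, (s <= t)%N -> L + (p * q) ^+ t * (U k r0 - L) <= U (k + t) (r0 + s)).
Proof.
move=> hL; elim=> [|t [IH1 IH2]].
  split; first by move=> r; rewrite addn0.
  by move=> s; rewrite leqn0 => /eqP ->; rewrite !addn0 expr0 mul1r addrC subrK.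
split.
  move=> r; rewrite addnS U_rec.
  have e1 : 0 <= p * (U (k + t) r - L) by rewrite mulr_ge0 ?subr_ge0 ?IH1 // ltW.
  have e2 : 0 <= q * (U (k + t) (r + n.-1) - L) by rewrite mulr_ge0 ?subr_ge0 ?IH1 // ltW.
  have e4 : L * (p + q) = L by rewrite hpq mulr1.
  lra.
move=> s hs; rewrite addnS U_rec exprSr.
have hX : 0 <= U k r0 - L by rewrite subr_ge0.
have hD : 0 <= (p * q) ^+ t by rewrite exprn_ge0 // mulr_ge0 // ltW.
move: hX hD; set D := (p * q) ^+ t; set X := U k r0 - L => hX hD.
have hY : 0 <= D * X := mulr_ge0 hD hX.
case: s hs => [|s] hs.
  have h1 := IH2 0%N (leq0n t); rewrite addn0 in h1 *.
  have h2 := IH1 (r0 + n.-1).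
  have e1 : 0 <= p * (U (k + t) r0 - (L + D * X)) by rewrite mulr_ge0 ?subr_ge0 // ltW.
  have e2 : 0 <= q * (U (k + t) (r0 + n.-1) - L) by rewrite mulr_ge0 ?subr_ge0 // ltW.
  have e3 : 0 <= D * X * p * p by rewrite !mulr_ge0 // ltW.
  have e4 : L * (p + q) = L by rewrite hpq mulr1.
  have e5 : D * X * p * (p + q) = D * X * p by rewrite hpq mulr1.
  lra.
have h1 := IH1 (r0 + s.+1).
have h2 := IH2 s hs.
rewrite (_ : (r0 + s.+1 + n.-1 = r0 + s + n)%N); last by lia.
rewrite U_perD.
have e1 : 0 <= p * (U (k + t) (r0 + s.+1) - L) by rewrite mulr_ge0 ?subr_ge0 // ltW.
have e2 : 0 <= q * (U (k + t) (r0 + s) - (L + D * X)) by rewrite mulr_ge0 ?subr_ge0 // ltW.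
have e3 : 0 <= D * X * q * q by rewrite !mulr_ge0 // ltW.
have e4 : L * (p + q) = L by rewrite hpq mulr1.
have e5 : D * X * q * (p + q) = D * X * q by rewrite hpq mulr1.
lra.
Qed.

Lemma mn_step k r0 : (r0 < n)%N -> mn k + (p * q) ^+ n.-1 * (U k r0 - mn k) <= mn (k + n.-1).
Proof.
move=> hr0; apply: mn_ge => r.
have [_ H] := propag k (mn k) r0 (mn_le k) n.-1.
rewrite -(U_per (k + n.-1) r).
have hr := ltn_pmod r hn.
case: (leqP r0 (r %% n)) => h.
  have := H (r %% n - r0)%N; rewrite subnKC //; apply; lia.
have := H (r %% n + n - r0)%N.
rewrite (_ : (r0 + (r %% n + n - r0) = r %% n + n)%N); last by lia.
by rewrite U_perD; apply; lia.
Qed.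


Lemma cvg_sumn (N : nat) (f : 'I_N -> nat -> R) (L : 'I_N -> R) :
  (forall i, f i @ \oo --> L i) ->
  (fun k => \sum_(i < N) f i k) @ \oo --> \sum_(i < N) L i.
Proof.
move=> h; apply: (@cvg_big _ _ +%R 0 predT add_continuous) => //.
Qed.

Lemma U_cvg : exists l : R, l != 0 /\ forall r, (r < n)%N -> (fun k => U k r) @ \oo --> l.
Proof.
have nd : nondecreasing_seq mn by apply/nondecreasing_seqP => k; exact: mn_mono.
have ub : has_ubound (range mn) by exists 1 => _ [k _ <-]; exact: mn_le1.
have hl := nondecreasing_cvgn nd ub.
move: hl; set l := sup (range mn) => hl.
have hd : 0 < (p * q) ^+ n.-1 by rewrite exprn_gt0 // mulr_gt0.
move: hd; set d := (p * q) ^+ n.-1 => hd.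
have hU : forall r, (r < n)%N -> (fun k => U k r) @ \oo --> l.
  move=> r hr.
  have hsh : (fun k => mn (k + n.-1)%N) @ \oo --> l by rewrite (cvg_shiftn n.-1 mn).
  have hg : (fun k => (mn (k + n.-1)%N - mn k) / d) @ \oo --> 0.
    rewrite -(mul0r d^-1) -(subrr l).
    by apply: cvgM; [apply: cvgB|exact: cvg_cst].
  have hg2 : (fun k => U k r - mn k) @ \oo --> 0.
    apply: (squeeze_cvgr _ (cvg_cst 0) hg).
    apply: nearW => k /=.
    rewrite subr_ge0 mn_le /= ler_pdivlMr //.
    have := mn_step k r hr; rewrite -/d; lra.
  have E : (fun k => U k r) = ((fun k => U k r - mn k) + mn).
    by apply: funext => k; rewrite /= subrK.
  by rewrite E -[l]add0r; apply: cvgD.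
exists l; split => //.
have hs := cvg_sumn n (fun (i : 'I_n) k => U k i) (fun=> l) (fun i => hU i (ltn_ord i)).
have E : (fun k => \sum_(i < n) U k i) = (fun=> 1).
  by apply: funext => k; rewrite U_sum.
rewrite E sumr_const card_ord in hs.
have h1 : 1 = l *+ n.
  have := cvg_lim _ hs; rewrite lim_cst //.
  by move=> ->.
apply/eqP => l0; move: h1; rewrite l0 mul0rn => /eqP.
by rewrite oner_eq0.
Qed.


Lemma W_cvg (c : nat -> R) : (forall r, 0 < c r) ->
  exists L : R, L != 0 /\ (fun k => \sum_(r < n) c r * U k r) @ \oo --> L.
Proof.
move=> hc; have [l [l0 hl]] := U_cvg.
exists (\sum_(r < n) c r * l); split.
  rewrite -mulr_suml mulf_neq0 //.
  rewrite (bigD1 (Ordinal hn)) //=.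
  have h1 := hc 0%N.
  have h2 : 0 <= \sum_(i < n | i != Ordinal hn) c i by apply: sumr_ge0 => i _; exact: ltW.
  by rewrite gt_eqF // ltr_wpDr.
apply: (cvg_sumn n (fun (i : 'I_n) k => c i * U k i)) => i.
exact: (cvgM (cvg_cst (c i)) (hl i (ltn_ord i))).
Qed.

End Equi.

Lemma ratio_cvg (R : realType) (W : nat -> R) (c L : R) : L != 0 -> W @ \oo --> L ->
  (fun k => c * W k.+1 * (W k)^-1 - 1) @ \oo --> c - 1.
Proof.
move=> L0 hW.
have hW1 : (fun k => W k.+1) @ \oo --> L by rewrite cvg_shiftS.
have -> : c - 1 = c * L * L^-1 - 1 by rewrite -mulrA mulfV // mulr1.
apply: cvgB; last exact: cvg_cst.
apply: cvgM; last exact: cvgV.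
apply: cvgM; [exact: cvg_cst | exact: hW1].
Qed.
End Aux.

Lemma key (R : realType) (a n k : nat) (hn : (0 < n)%N) (al : R) (hal : 0 < al)
  (haln : al ^+ n = a%:R) :
  (fk1 a n k)%:~R = (1 + al) ^+ k *
     \sum_(r < n) al ^- r * Aux.U R n ((1 + al)^-1) (al / (1 + al)) k r.
Proof.
rewrite fk1E // rmorph_sum /=.
under [in RHS]eq_bigr do rewrite /Aux.U mulr_sumr.
rewrite (@Aux.partition_sum R n hn (fun r j => al ^- r * Aux.T R ((1 + al)^-1) (al / (1 + al)) k j)).
rewrite mulr_sumr big_mkord; apply: eq_bigr => j _.
have hj : (j <= k)%N by rewrite -ltnS.
have h1 : 0 < 1 + al by rewrite addr_gt0.
rewrite -pmulrn natrM natrX -haln /Aux.T.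
have -> : (1 + al) ^+ k = (1 + al) ^+ j * (1 + al) ^+ (k - j) by rewrite -exprD subnKC.
rewrite expr_div_n exprVn.
have -> : al ^+ j = (al ^+ n) ^+ (j %/ n) * al ^+ (j %% n).
  by rewrite -exprM -exprD mulnC -divn_eq.
have hA : al ^+ (j %% n) != 0 by rewrite expf_neq0 // gt_eqF.
have hB : (1 + al) ^+ j != 0 by rewrite expf_neq0 // gt_eqF.
have hC : (1 + al) ^+ (k - j) != 0 by rewrite expf_neq0 // gt_eqF.
move: hA hB hC.
set A := al ^+ (j %% n); set B := (1 + al) ^+ j; set C := (1 + al) ^+ (k - j).
set P := (al ^+ n) ^+ (j %/ n).
move=> hA hB hC.
by clearbody A B C P; field; rewrite hA hB hC.
Qed.

Theorem lemma6p1 (R : realType) (a n : nat) (ha : (0 < a)%N) (hn : (0 < n)%N) :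
  (fun k : nat => ((fk1 a n k.+1)%:~R / (fk1 a n k)%:~R : R) - 1) @ \oo -->
    ((a%:R : R) `^ (n%:R^-1)).
Proof.
set al := (a%:R : R) `^ (n%:R^-1).
have ha' : 0 < (a%:R : R) by rewrite ltr0n.
have hal : 0 < al by apply: powR_gt0.
have haln : al ^+ n = a%:R.
  rewrite /al -powR_mulrn ?ltW // -powRrM mulVf ?pnatr_eq0 -?lt0n //.
  by rewrite powRr1 // ltW.
have h1 : 0 < 1 + al by rewrite addr_gt0.
have hp : 0 < (1 + al)^-1 by rewrite invr_gt0.
have hq : 0 < al / (1 + al) by rewrite divr_gt0.
have hpq : (1 + al)^-1 + al / (1 + al) = 1.
  by field; rewrite gt_eqF.
have hc : forall r : nat, 0 < al ^- r by move=> r; rewrite invr_gt0 exprn_gt0.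
have [L [L0 hL]] := @Aux.W_cvg R n hn _ _ hp hq hpq _ hc.
have H := @Aux.ratio_cvg R _ (1 + al) L L0 hL.
have e : 1 + al - 1 = al by rewrite addrAC subrr add0r.
rewrite e in H.
have E : (fun k : nat => ((fk1 a n k.+1)%:~R / (fk1 a n k)%:~R : R) - 1) =
  (fun k => (1 + al) * (\sum_(r < n) al ^- r * Aux.U R n ((1 + al)^-1) (al / (1 + al)) k.+1 r) *
     (\sum_(r < n) al ^- r * Aux.U R n ((1 + al)^-1) (al / (1 + al)) k r)^-1 - 1).
  apply: funext => k; rewrite !(@key R a n _ hn al hal haln) exprS invfM.
  have hX : (1 + al) ^+ k * ((1 + al) ^+ k)^-1 = 1 by rewrite mulfV // expf_neq0 // gt_eqF.
  move: hX; set X := (1 + al) ^+ k; move=> hX.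
  congr (_ - _).
  set W1 := \sum_(r < n) _; set W0 := \sum_(r < n) _.
  transitivity ((1 + al) * W1 * W0^-1 * (X * X^-1)); first by ring.
  by rewrite hX mulr1.
by rewrite E.
Qed.
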